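(* Let $D=[0,1]^2\setminus\{(0,0),(1,1)\}$. A function $J\colon D\to[0,1]$ is an involutive Jamesian function if and only if it satisfies the following three conditions: (i) $J(a,J(a,b))=b$ for all $0<a<1$ and $0\le b\le 1$; (ii) $J(b,a)=1-J(a,b)$ for all $(a,b)\in D$; (iii) $J(a,b)$ is a non-decreasing function of $a$ for each $0\le b\le 1$ and a strictly increasing function of $a$ for each $0<b<1$.
   Context: Let $D=[0,1]^2\setminus\{(0,0),(1,1)\}$. A function $J\colon D\to\mathbb{R}$ is called Jamesian if it satisfies, for all $(a,b)\in D$: (a) $J(a,\tfrac12)=a$; (b) $J(a,0)=1$ for $0<a\le 1$; (c) $J(b,a)=1-J(a,b)$; (d) $J(1-b,1-a)=J(a,b)$; (e) $J(a,b)$ is a non-decreasing function of $a$ for each $0\le b\le 1$ and a strictly increasing function of $a$ for each $0<b<1$. A Jamesian function is called involutive if in addition $J(a,J(a,b))=b$ whenever $0<a<1$ and $0\le b\le 1$. *)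

(* Defs.v *)
From Stdlib Require Import Reals Lra.
Open Scope R_scope.

Definition inD (a b : R) : Prop :=
  0 <= a <= 1 /\ 0 <= b <= 1 /\ ~ (a = 0 /\ b = 0) /\ ~ (a = 1 /\ b = 1).

Definition J_monotone (J : R -> R -> R) : Prop :=
  (forall b, 0 <= b <= 1 ->
     forall a1 a2, inD a1 b -> inD a2 b -> a1 <= a2 -> J a1 b <= J a2 b) /\
  (forall b, 0 < b < 1 ->
     forall a1 a2, inD a1 b -> inD a2 b -> a1 < a2 -> J a1 b < J a2 b).

(* Only the values of J on D matter. *)
Definition Jamesian (J : R -> R -> R) : Prop :=
  (forall a b, inD a b -> J a (1/2) = a) /\
  (forall a, 0 < a <= 1 -> J a 0 = 1) /\
  (forall a b, inD a b -> J b a = 1 - J a b) /\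
  (forall a b, inD a b -> J (1 - b) (1 - a) = J a b) /\
  J_monotone J.

Definition involutive_Jamesian (J : R -> R -> R) : Prop :=
  Jamesian J /\
  (forall a b, 0 < a < 1 -> 0 <= b <= 1 -> J a (J a b) = b).

(* Main.v *)
Require Import Defs.
From Stdlib Require Import Reals Lra.
Open Scope R_scope.

Lemma inD_intro a b : 0<=a<=1 -> 0<=b<=1 -> (0<a \/ 0<b) -> (a<1 \/ b<1) -> inD a b.
Proof. intros. unfold inD. repeat split; try lra; intros [? ?]; lra. Qed.

Lemma inD_elim a b : inD a b -> 0<=a<=1 /\ 0<=b<=1.
Proof. unfold inD; tauto. Qed.

Theorem proposition5p1 (J : R -> R -> R)
  (HJ01 : forall a b, inD a b -> 0 <= J a b <= 1) :
  involutive_Jamesian J <->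
  ((forall a b, 0 < a < 1 -> 0 <= b <= 1 -> J a (J a b) = b) /\
   (forall a b, inD a b -> J b a = 1 - J a b) /\
   J_monotone J).
Proof.
  split.
  { intros [[_ [_ [H2 [_ HM]]]] H1]. tauto. }
  intros [H1 [H2 [Mw Ms]]].
  assert (Fd : forall a, 0<a<1 -> J a a = 1/2).
  { intros a Ha. assert (h := H2 a a (inD_intro a a ltac:(lra) ltac:(lra) ltac:(lra) ltac:(lra))). lra. }
  assert (Dec : forall a b1 b2, 0<a<1 -> 0<=b1 -> b1<=b2 -> b2<=1 -> J a b2 <= J a b1).
  { intros a b1 b2 Ha ? ? ?.
    assert (h1 := H2 a b1 (inD_intro a b1 ltac:(lra) ltac:(lra) ltac:(lra) ltac:(lra))).
    assert (h2 := H2 a b2 (inD_intro a b2 ltac:(lra) ltac:(lra) ltac:(lra) ltac:(lra))).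
    assert (h3 := Mw a ltac:(lra) b1 b2 (inD_intro b1 a ltac:(lra) ltac:(lra) ltac:(lra) ltac:(lra))
                   (inD_intro b2 a ltac:(lra) ltac:(lra) ltac:(lra) ltac:(lra)) ltac:(lra)).
    lra. }
  assert (Fa0 : forall a, 0<a<1 -> J a 0 = 1).
  { intros a Ha. assert (h := H1 a 1 Ha ltac:(lra)).
    assert (b1 := HJ01 a 1 (inD_intro a 1 ltac:(lra) ltac:(lra) ltac:(lra) ltac:(lra))).
    assert (d := Dec a 0 (J a 1) Ha ltac:(lra) ltac:(lra) ltac:(lra)).
    assert (b2 := HJ01 a 0 (inD_intro a 0 ltac:(lra) ltac:(lra) ltac:(lra) ltac:(lra))). lra. }
  assert (Fa1 : forall a, 0<a<1 -> J a 1 = 0).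
  { intros a Ha. assert (h := H1 a 0 Ha ltac:(lra)).
    assert (b1 := HJ01 a 0 (inD_intro a 0 ltac:(lra) ltac:(lra) ltac:(lra) ltac:(lra))).
    assert (d := Dec a (J a 0) 1 Ha ltac:(lra) ltac:(lra) ltac:(lra)).
    assert (b2 := HJ01 a 1 (inD_intro a 1 ltac:(lra) ltac:(lra) ltac:(lra) ltac:(lra))). lra. }
  assert (F10 : J 1 0 = 1).
  { assert (h := Mw 0 ltac:(lra) (1/2) 1 (inD_intro (1/2) 0 ltac:(lra) ltac:(lra) ltac:(lra) ltac:(lra))
                   (inD_intro 1 0 ltac:(lra) ltac:(lra) ltac:(lra) ltac:(lra)) ltac:(lra)).
    assert (e := Fa0 (1/2) ltac:(lra)).
    assert (b := HJ01 1 0 (inD_intro 1 0 ltac:(lra) ltac:(lra) ltac:(lra) ltac:(lra))). lra. }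
  assert (Fb0 : forall a, 0<a<=1 -> J a 0 = 1).
  { intros a Ha. destruct (Req_dec a 1) as [->|]; [exact F10|]. apply Fa0; lra. }
  assert (F01 : J 0 1 = 0).
  { assert (h := H2 1 0 (inD_intro 1 0 ltac:(lra) ltac:(lra) ltac:(lra) ltac:(lra))). lra. }
  assert (Fa1' : forall a, 0<=a<1 -> J a 1 = 0).
  { intros a Ha. destruct (Req_dec a 0) as [->|]; [exact F01|]. apply Fa1; lra. }
  assert (F0b : forall b, 0<b<=1 -> J 0 b = 0).
  { intros b Hb. assert (h := H2 b 0 (inD_intro b 0 ltac:(lra) ltac:(lra) ltac:(lra) ltac:(lra))).
    rewrite (Fb0 b Hb) in h. lra. }
  assert (F1b : forall b, 0<=b<1 -> J 1 b = 1).
  { intros b Hb. assert (h := H2 b 1 (inD_intro b 1 ltac:(lra) ltac:(lra) ltac:(lra) ltac:(lra))).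
    rewrite (Fa1' b Hb) in h. lra. }
  assert (Int : forall a b, 0<a<1 -> 0<b<1 -> 0 < J a b < 1).
  { intros a b Ha Hb.
    assert (bd := HJ01 a b (inD_intro a b ltac:(lra) ltac:(lra) ltac:(lra) ltac:(lra))).
    destruct (Req_dec (J a b) 0) as [e|ne].
    { assert (h := H1 a b Ha ltac:(lra)). rewrite e, (Fa0 a Ha) in h. lra. }
    destruct (Req_dec (J a b) 1) as [e|ne'].
    { assert (h := H1 a b Ha ltac:(lra)). rewrite e, (Fa1 a Ha) in h. lra. }
    lra. }
  split; [|exact H1].
  split.
  { intros a b Hab. destruct (inD_elim a b Hab) as [Ha _].
    destruct (Req_dec a 0) as [->|n0]; [apply F0b; lra|].
    destruct (Req_dec a 1) as [->|n1]; [apply F1b; lra|].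
    assert (h := H1 a a ltac:(lra) ltac:(lra)). rewrite (Fd a ltac:(lra)) in h. exact h. }
  split; [exact Fb0|].
  split; [exact H2|].
  split; [|split; assumption].
  intros a b Hab. pose proof Hab as Hab'. destruct Hab' as [Ha [Hb [N0 N1]]].
  destruct (Req_dec a 0) as [->|a0].
  { assert (b <> 0) by (intro; apply N0; split; auto).
    rewrite F0b by lra. replace (1-0) with 1 by ring. apply Fa1'. lra. }
  destruct (Req_dec a 1) as [->|a1].
  { assert (b <> 1) by (intro; apply N1; split; auto).
    rewrite F1b by lra. replace (1-1) with 0 by ring. apply Fb0. lra. }
  destruct (Req_dec b 0) as [->|b0].
  { rewrite Fb0 by lra. replace (1-0) with 1 by ring. apply F1b. lra. }
  destruct (Req_dec b 1) as [->|b1].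
  { rewrite Fa1' by lra. replace (1-1) with 0 by ring. apply F0b. lra. }
  assert (Ha' : 0<a<1) by lra. assert (Hb' : 0<b<1) by lra.
  set (c := J a b). assert (Hc := Int a b Ha' Hb'). fold c in Hc.
  assert (e1 : J b a = 1 - c) by (apply H2; exact Hab).
  assert (e2 : J b (1-c) = a) by (rewrite <- e1; apply H1; lra).
  assert (e3 : J (1-c) b = 1 - a)
    by (rewrite (H2 b (1-c) (inD_intro b (1-c) ltac:(lra) ltac:(lra) ltac:(lra) ltac:(lra))), e2; reflexivity).
  assert (e4 : J (1-c) (1-a) = b) by (rewrite <- e3; apply H1; lra).
  assert (e5 : J (1-a) (1-c) = 1 - b)
    by (rewrite (H2 (1-c) (1-a) (inD_intro (1-c) (1-a) ltac:(lra) ltac:(lra) ltac:(lra) ltac:(lra))), e4; reflexivity).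
  assert (e6 : J (1-a) (1-b) = 1 - c) by (rewrite <- e5; apply H1; lra).
  rewrite (H2 (1-a) (1-b) (inD_intro (1-a) (1-b) ltac:(lra) ltac:(lra) ltac:(lra) ltac:(lra))), e6. lra.
Qed.
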